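(* Let $G$ be a real $n\times m$ matrix and $\mathbf v\in\mathbb R^n$, and let $\mathcal G=\{x\in\mathbb R^m: Gx\le \mathbf v\}$ (componentwise). Let $P$ be the nonnegative orthant of $\mathbb R^n$ and $F=\mathcal R(G)$. Let $\upsilon$ be the orthogonal projection of $\mathbf v$ onto $F^\perp$. Assume $\upsilon\ne0$ and $F\cap P=\{0\}$. Let $F_e=\mathrm{span}(\upsilon)+F$, and for $y\in F_e$ let $\beta(y)\in\mathbb R$ be the unique scalar such that $y-\beta(y)\upsilon\in F$. Then exactly one of the following three cases occurs. (a) $F_e\cap P=\{0\}$. In this case $\mathcal G=\emptyset$. (b) $F_e\cap P\neq\{0\}$ and $\beta(y)<0$ for every nonzero $y\in F_e\cap P$. In this case $\mathcal G=\emptyset$. (c) $F_e\cap P\neq\{0\}$ and $\beta(y)>0$ for every nonzero $y\in F_e\cap P$. In this case $\mathcal G\neq\emptyset$. *)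

(* Defs.v *)
From mathcomp Require Import all_boot all_order all_algebra.
From mathcomp Require Import reals.
Set Implicit Arguments. Unset Strict Implicit. Unset Printing Implicit Defensive.
Import Order.TTheory GRing.Theory Num.Theory.
Local Open Scope ring_scope.

Section Defs.
Variables (R : realType) (n m : nat).
Implicit Types (G : 'M[R]_(n, m)) (y u v : 'cV[R]_n).

Definition in_orthant y : Prop := forall i : 'I_n, 0 <= y i ord0.

Definition in_range G y : Prop := exists x : 'cV[R]_m, y = G *m x.

Definition in_range_perp G y : Prop := G^T *m y = 0.

Definition is_proj_range_perp G v u : Prop :=
  in_range_perp G u /\ in_range G (v - u).

Definition is_beta G u y (b : R) : Prop := in_range G (y - b *: u).

Definition in_Fe G u y : Prop := exists b : R, is_beta G u y b.

Definition in_polyhedron G v (x : 'cV[R]_m) : Prop :=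
  forall i : 'I_n, (G *m x) i ord0 <= v i ord0.

End Defs.

(* Main.v *)
Require Import Defs.
From Stdlib Require Classical_Prop.
From mathcomp Require Import all_boot all_order all_algebra.
From mathcomp Require Import reals.
Import Order.TTheory GRing.Theory Num.Theory.
Local Open Scope ring_scope.

Section S.
Variables (R : realType) (n m : nat) (G : 'M[R]_(n, m)).

Lemma perp_range0 (y : 'cV[R]_n) : in_range G y -> in_range_perp G y -> y = 0.
Proof.
move=> [x ->] Hp.
have H0 : (G *m x)^T *m (G *m x) = 0.
  by rewrite trmx_mul -mulmxA Hp mulmx0.
have : ((G *m x)^T *m (G *m x)) ord0 ord0 = 0 by rewrite H0 mxE.
rewrite mxE => /eqP; rewrite psumr_eq0 => [/allP Hall|i _]; last first.
  by rewrite !mxE -expr2 sqr_ge0.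
apply/matrixP => i j; rewrite ord1 [RHS]mxE.
have := Hall i (mem_index_enum _); rewrite !mxE => /eqP /eqP.
by rewrite mulf_eq0 orbb => /eqP.
Qed.

Lemma range_scale (a : R) y : in_range G y -> in_range G (a *: y).
Proof. by move=> [x ->]; exists (a *: x); rewrite scalemxAr. Qed.
Lemma range_add y z : in_range G y -> in_range G z -> in_range G (y + z).
Proof. by move=> [x ->] [x' ->]; exists (x + x'); rewrite mulmxDr. Qed.
Lemma range_opp y : in_range G y -> in_range G (- y).
Proof. by move=> [x ->]; exists (- x); rewrite mulmxN. Qed.
Variables (u : 'cV[R]_n).
Hypothesis Hu : in_range_perp G u.
Hypothesis Hu0 : u != 0.
Hypothesis HF : forall y, in_range G y -> in_orthant y -> y = 0.

Lemma u_notin : ~ in_range G u.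
Proof. by move=> H; move/eqP: Hu0; apply; apply: perp_range0. Qed.

Lemma beta_ne0 y b : in_orthant y -> y != 0 -> is_beta G u y b -> b != 0.
Proof.
move=> Hy Hy0 Hb; apply/eqP => b0; move: Hb; rewrite /is_beta b0 scale0r subr0.
by move=> /HF /(_ Hy) /eqP; rewrite (negPf Hy0).
Qed.

Lemma signs y1 b1 y2 b2 : in_orthant y1 -> y1 != 0 -> is_beta G u y1 b1 ->
  in_orthant y2 -> is_beta G u y2 b2 -> b1 < 0 -> 0 < b2 -> False.
Proof.
move=> H1 H10 Hb1 H2 Hb2 l1 l2.
set y := b2 *: y1 - b1 *: y2.
have Hr : in_range G y.
  have -> : y = b2 *: (y1 - b1 *: u) - b1 *: (y2 - b2 *: u).
    by rewrite /y !scalerBr !scalerA [b1 * b2]mulrC opprB addrA subrK.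
  by apply: range_add; [apply: range_scale|apply: range_opp; apply: range_scale].
have Ho : in_orthant y.
  move=> i; rewrite !mxE; apply: addr_ge0; first by apply: mulr_ge0; [apply: ltW|].
  by rewrite -mulNr; apply: mulr_ge0; [rewrite oppr_ge0 ltW|].
have Hy0 := HF y Hr Ho.
move/eqP: H10; apply; apply/matrixP => i j; rewrite ord1 [RHS]mxE.
have : y i ord0 = 0 by rewrite Hy0 mxE.
rewrite /y !mxE => /eqP; rewrite paddr_eq0; last 2 first.
- by apply: mulr_ge0; [apply: ltW|].
- by rewrite -mulNr; apply: mulr_ge0; [rewrite oppr_ge0 ltW|].
by case/andP; rewrite mulf_eq0 (gt_eqF l2) => /eqP.
Qed.

Lemma beta1_ne0 y : is_beta G u y 1 -> y != 0.
Proof.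
move=> Hb; apply/eqP => y0; move: Hb; rewrite /is_beta y0 sub0r scale1r.
by move/range_opp; rewrite opprK; apply: u_notin.
Qed.
End S.
Arguments beta1_ne0 {R n m G u} Hu Hu0 {y}.
Arguments beta_ne0 {R n m G u} HF {y b}.
Arguments signs {R n m G u} HF {y1 b1 y2 b2}.

Theorem mainTheorem4 (R : realType) (n m : nat) (G : 'M[R]_(n, m))
  (v upsilon : 'cV[R]_n) :
  is_proj_range_perp G v upsilon ->
  upsilon != 0 ->
  (forall y, in_range G y -> in_orthant y -> y = 0) ->
  let caseA := forall y, in_Fe G upsilon y -> in_orthant y -> y = 0 in
  let caseB := (exists y, [/\ in_Fe G upsilon y, in_orthant y & y != 0]) /\
               (forall y b, in_orthant y -> y != 0 -> is_beta G upsilon y b -> b < 0) in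
  let caseC := (exists y, [/\ in_Fe G upsilon y, in_orthant y & y != 0]) /\
               (forall y b, in_orthant y -> y != 0 -> is_beta G upsilon y b -> 0 < b) in
  let Gempty := forall x : 'cV[R]_m, ~ in_polyhedron G v x in
  ((caseA \/ caseB \/ caseC) /\
   ~ (caseA /\ caseB) /\ ~ (caseA /\ caseC) /\ ~ (caseB /\ caseC)) /\
  (caseA -> Gempty) /\
  (caseB -> Gempty) /\
  (caseC -> exists x : 'cV[R]_m, in_polyhedron G v x).
Proof.
move=> [Hperp [x0 Hx0]] Hu0 HF caseA caseB caseC Gempty.
have key : forall x, in_polyhedron G v x ->
    in_orthant (v - G *m x) /\ is_beta G upsilon (v - G *m x) 1.
  move=> x Hx; split; first by move=> i; have := Hx i; rewrite !mxE subr_ge0.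
  exists (x0 - x); rewrite scale1r mulmxBr -Hx0; by rewrite addrAC.
have HA : caseA -> Gempty.
  move=> hA x /key [Ho Hb].
  have := beta1_ne0 Hperp Hu0 Hb; rewrite (hA _ _ Ho) ?eqxx //; by exists 1.
have HB : caseB -> Gempty.
  move=> [_ hB] x /key [Ho Hb].
  by have := hB _ _ Ho (beta1_ne0 Hperp Hu0 Hb) Hb; rewrite ltr10.
have HC : caseC -> exists x : 'cV[R]_m, in_polyhedron G v x.
  move=> [[y [[b [x Hx]] Hy Hy0]] hC].
  have bp : 0 < b by apply: (hC y b Hy Hy0); exists x.
  exists (x0 - b^-1 *: x).
  have E : G *m (x0 - b^-1 *: x) = v - b^-1 *: y.
    rewrite mulmxBr -scalemxAr -Hx -Hx0 scalerBr scalerA mulVf ?gt_eqF // scale1r.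
    by rewrite opprB addrA subrK.
  move=> i; rewrite E !mxE gerBl; apply: mulr_ge0; [rewrite invr_ge0 ltW|] => //.
split; last by [].
split.
  case: (Classical_Prop.classic (exists y, [/\ in_Fe G upsilon y, in_orthant y & y != 0]))
    => [Ex|NEx]; last first.
    left => y Hfe Hy; apply: Classical_Prop.NNPP => Hne; apply: NEx.
    by exists y; split => //; apply/eqP.
  right; case: (Ex) => y1 [[b1 Hb1] Hy1 Hy10].
  have := beta_ne0 HF Hy1 Hy10 Hb1; rewrite neq_lt => /orP[l1|l1].
    left; split => // y b Hy Hy0 Hb.
    have := beta_ne0 HF Hy Hy0 Hb; rewrite neq_lt => /orP[//|l].
    by case: (signs HF Hy1 Hy10 Hb1 Hy Hb l1 l).
  right; split => // y b Hy Hy0 Hb.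
  have := beta_ne0 HF Hy Hy0 Hb; rewrite neq_lt => /orP[l|//].
  by case: (signs HF Hy Hy0 Hb Hy1 Hb1 l l1).
split; first by move=> [hA [[y [Hfe Hy Hy0]] _]]; move: Hy0; rewrite (hA y Hfe Hy) eqxx.
split; first by move=> [hA [[y [Hfe Hy Hy0]] _]]; move: Hy0; rewrite (hA y Hfe Hy) eqxx.
move=> [[[y [[b Hb] Hy Hy0]] hB] [_ hC]].
by have := hB y b Hy Hy0 Hb; have := hC y b Hy Hy0 Hb; move=> l1 l2; have := lt_trans l2 l1; rewrite ltxx.
Qed.
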